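(* Let $W(x,x')=\tfrac12Px\cdot x-Lx\cdot x'+\tfrac12Qx'\cdot x'$ with $P,Q$ real symmetric and $L$ real invertible, let $m\in\mathbb{Z}$ with $m$ even iff $\det L>0$, and assume $\det(S_W-I)\neq0$. Set $\nu(\widehat S_{W,m})=m-\operatorname{Inert}(P+Q-L-L^T)$. Then $$\nu(\widehat S_{W,m})\equiv n+\tfrac1\pi\arg\det(S_W-I)\pmod 2,$$ i.e. $\nu(\widehat S_{W,m})\equiv n \pmod 2$ if $\det(S_W-I)>0$ and $\nu(\widehat S_{W,m})\equiv n+1\pmod 2$ if $\det(S_W-I)<0$.
   Context: $S_W\in\operatorname{Sp}(n)$ is the symplectic matrix generated by $W$: $(x,p)=S_W(x',p')\iff p=\partial_xW(x,x'),\ p'=-\partial_{x'}W(x,x')$. $\widehat S_{W,m}$ is the quadratic Fourier transform $\widehat S_{W,m}\psi(x)=e^{-in\pi/4}(2\pi\hbar)^{-n/2}i^m\sqrt{|\det L|}\int e^{\frac i\hbar W(x,x')}\psi(x')d^nx'$. $\operatorname{Inert}A$ denotes the number of negative eigenvalues of a real symmetric matrix $A$; $\arg$ of a nonzero real number is $0$ if positive and $\pi$ if negative. *)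

(* Defs.v *)
From HB Require Import structures.
From mathcomp Require Import all_boot all_order all_algebra.
From mathcomp Require Import spectral.
Set Implicit Arguments. Unset Strict Implicit. Unset Printing Implicit Defensive.
Import Order.TTheory GRing.Theory Num.Theory.
Local Open Scope ring_scope.

(* Real matrices are modelled as matrices with real (Num.real) entries over an
   arbitrary numClosedFieldType C (e.g. the complex numbers), so that
   characteristic polynomials split and eigenvalues exist. *)

Definition eigenvalues_seq (C : numClosedFieldType) (n : nat) (A : 'M[C]_n) : seq C :=
  sval (closed_field_poly_normal (char_poly A)).

Definition Inert (C : numClosedFieldType) (n : nat) (A : 'M[C]_n) : nat :=
  count (fun z : C => z < 0) (eigenvalues_seq A).

(* The symplectic matrix S_W generated by
     W(x,x') = 1/2 P x.x - L x.x' + 1/2 Q x'.x',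
   acting on column vectors (x',p') |-> (x,p), where p = d_x W = P x - L^T x'
   and p' = - d_{x'} W = L x - Q x'.  Solving:
     x = L^{-1} Q x' + L^{-1} p',
     p = (P L^{-1} Q - L^T) x' + P L^{-1} p'. *)
Definition S_W (C : numClosedFieldType) (n : nat) (P L Q : 'M[C]_n) : 'M[C]_(n + n) :=
  block_mx (invmx L *m Q)                  (invmx L)
           (P *m invmx L *m Q - L^T)       (P *m invmx L).

Definition nu_index (C : numClosedFieldType) (n : nat) (P L Q : 'M[C]_n) (m : int) : int :=
  m - (Inert (P + Q - L - L^T))%:Z.

(* Main.v *)
Require Import Defs.
From HB Require Import structures.
From mathcomp Require Import all_boot all_order all_algebra zify.
From mathcomp Require Import spectral.
Import Order.TTheory GRing.Theory Num.Theory.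
Local Open Scope ring_scope.

Lemma det_SW (C : numClosedFieldType) (n : nat) (P L Q : 'M[C]_n) :
  L \in unitmx ->
  \det (S_W P L Q - 1%:M) = (-1) ^+ n * (\det L)^-1 * \det (P + Q - L - L^T).
Proof.
move=> Lu.
set A := invmx L *m Q - 1%:M. set B := invmx L. set E := P - L^T.
have H1 : S_W P L Q - 1%:M = block_mx A B (P *m invmx L *m Q - L^T) (P *m invmx L - 1%:M).
  by rewrite /S_W (scalar_mx_block n n) opp_block_mx add_block_mx ?subr0 ?sub0r ?oppr0 ?addr0.
have HL : \det (block_mx (1%:M : 'M[C]_n) 0 (- P) 1%:M) = 1 by rewrite det_lblock det1 mulr1.
have HR : \det (block_mx (1%:M : 'M[C]_n) 0 E 1%:M) = 1 by rewrite det_lblock det1 mulr1.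
have H2 : block_mx (1%:M : 'M[C]_n) 0 (- P) 1%:M *m (S_W P L Q - 1%:M) *m block_mx 1%:M 0 E 1%:M
   = block_mx (invmx L *m (P + Q - L - L^T)) B 0 (- 1%:M).
  rewrite H1 !mulmx_block ?mul1mx ?mul0mx ?addr0 ?add0r ?mulmx1 ?mulmx0 ?addr0 ?add0r.
  rewrite /A /B /E ?mulmxBl ?mulmxBr ?mulNmx ?mul1mx ?mulmx1 ?mulmxA.
  congr block_mx.
  - by rewrite mulmxDr mulVmx // addrACA (addrC (invmx L *m Q)) !addrA.
  - rewrite addKr !mulNmx !mul1mx opprK.
    rewrite (addrC (- _) P) -[P + _ + _]addrA addKr (addrC (- P)) -opprB.
    by rewrite opprK opprB addrA subrK subrr.
  - by rewrite addKr.
have := congr1 determinant H2.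
rewrite !det_mulmx HL HR mul1r mulr1 => ->.
rewrite det_ublock det_mulmx det_inv.
have -> : - (1%:M : 'M[C]_n) = (-1)%:M by rewrite raddfN.
by rewrite det_scalar mulrC mulrA.
Qed.
Lemma sign_decomp {C : numClosedFieldType} {x : C} : x \is Num.real -> x != 0 ->
  exists2 p : C, 0 < p & x = (-1) ^+ (x < 0)%R * p.
Proof.
move=> xr x0; exists (Num.norm x); first by rewrite normr_gt0.
have [xlt|xgt|xeq] := real_ltgtP xr (rpred0 _).
- by rewrite expr1 ltr0_norm // mulN1r opprK.
- by rewrite expr0 mul1r gtr0_norm.
- by move: x0; rewrite xeq eqxx.
Qed.

Lemma prod_sign (C : numClosedFieldType) (s : seq C) :
  all (fun x => x \is Num.real) s -> all (fun x => x != 0) s ->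
  exists2 p : C, 0 < p & \prod_(x <- s) x = (-1) ^+ (count (fun x => x < 0)%R s) * p.
Proof.
elim: s => [|x s IH] /=; first by move=> _ _; exists 1; rewrite ?ltr01 ?big_nil ?mul1r.
move=> /andP[xr sr] /andP[x0 s0].
have [p p0 e] := IH sr s0; have [q q0 xe] := sign_decomp xr x0.
exists (q * p); first exact: mulr_gt0.
by rewrite big_cons e {1}xe exprD mulrACA.
Qed.

Lemma det_real (C : numClosedFieldType) n (A : 'M[C]_n) : A \is a realmx -> \det A \is Num.real.
Proof.
move=> /mxOverP Ar; rewrite /determinant; apply: rpred_sum => s _.
apply: rpredM; first by apply: rpredX; rewrite realN real1.
by apply: rpred_prod => i _; apply: Ar.
Qed.

Lemma char_poly_conj (C : numClosedFieldType) n (U D : 'M[C]_n) : U \in unitmx ->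
  char_poly (invmx U *m D *m U) = char_poly D.
Proof.
move=> Uu; rewrite /char_poly /char_poly_mx !map_mxM.
set iU := map_mx polyC (invmx U); set U' := map_mx polyC U.
have hU : iU *m U' = 1%:M by rewrite /iU /U' -map_mxM mulVmx // map_mx1.
have hX : ('X%:M : 'M[{poly C}]_n) = iU *m 'X%:M *m U'.
  by rewrite mul_mx_scalar -scalemxAl hU scalemx1.
rewrite {1}hX -mulmxBl -mulmxBr !det_mulmx mulrAC -det_mulmx hU det1 mul1r.
done.
Qed.

Lemma sign_pos {C : numClosedFieldType} (p : C) k : 0 < p -> 0 < (-1) ^+ k * p -> ~~ odd k.
Proof.
move=> p0; rewrite -signr_odd; case: (odd k) => //=.
by rewrite expr1 mulN1r oppr_gt0 => h; have := lt_trans h p0; rewrite ltxx.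
Qed.

Lemma sign_neg {C : numClosedFieldType} (p : C) k : 0 < p -> (-1) ^+ k * p < 0 -> odd k.
Proof.
move=> p0; rewrite -signr_odd; case: (odd k) => //=.
by rewrite expr0 mul1r => h; have := lt_trans h p0; rewrite ltxx.
Qed.

Theorem mainTheorem5 (C : numClosedFieldType) (n : nat) (P L Q : 'M[C]_n) (m : int) :
  P \is a realmx -> Q \is a realmx -> L \is a realmx ->
  P^T = P -> Q^T = Q ->
  L \in unitmx ->
  (~~ odd `|m|%N = (0 < \det L)) ->
  \det (S_W P L Q - 1%:M) != 0 ->
  (0 < \det (S_W P L Q - 1%:M) ->
     (nu_index P L Q m = n%:Z %[mod 2])%Z) /\
  (\det (S_W P L Q - 1%:M) < 0 ->
     (nu_index P L Q m = n%:Z + 1 %[mod 2])%Z).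
Proof.
move=> Pr Qr Lr Ps Qs Lu hm hdet.
rewrite /nu_index; rewrite det_SW // in hdet *.
set M := P + Q - L - L^T.
have Mr : M \is a realmx.
  apply/mxOverP => i j; rewrite !mxE.
  move/mxOverP: Pr => Pr; move/mxOverP: Qr => Qr; move/mxOverP: Lr => Lr.
  by rewrite ?rpredB ?rpredD ?Pr ?Qr ?Lr.
have Msym : M \is symmetricmx.
  apply/is_hermitianmxP; rewrite expr0 scale1r map_mx_id //.
  by rewrite /M !raddfB raddfD /= trmxK Ps Qs addrAC.
have Mh : M \is hermsymmx := realsym_hermsym Msym Mr.
have dr := hermitian_spectral_diag_real Mh.
have /orthomx_spectralP Me := hermitian_normalmx Mh.
set U := spectralmx M in Me; set d := spectral_diag M in Me dr.
have Uu : U \in unitmx := spectral_unit M.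
set ds := [seq d 0 i | i <- enum 'I_n].
have detM : \det M = \prod_(x <- ds) x.
  rewrite Me !det_mulmx det_inv mulrAC mulVf ?mul1r; last by rewrite -unitfE -unitmxE.
  by rewrite det_diag big_map big_enum.
have cpM : char_poly M = \prod_(x <- ds) ('X - x%:P).
  rewrite Me char_poly_conj // char_poly_trig ?is_diag_mx_is_trig ?diag_mx_is_diag //.
  rewrite big_map big_enum /=; apply: eq_bigr => i _; by rewrite mxE eqxx mulr1n.
have hperm : perm_eq (eigenvalues_seq M) ds.
  apply: prod_XsubC_eq; rewrite -cpM /eigenvalues_seq.
  case: closed_field_poly_normal => s hs /=.
  by rewrite {1}hs (monicP (char_poly_monic M)) scale1r.
have InertE : Inert M = count (fun x => x < 0)%R ds by rewrite /Inert (permP hperm).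
have dsr : all (fun x => x \is Num.real) ds.
  by apply/allP => x /mapP [i _ ->]; move/mxOverP: dr; apply.
have dM0 : \det M != 0.
  by apply: contraNneq hdet => ->; rewrite mulr0.
have dsnz : all (fun x => x != 0) ds.
  move: dM0; rewrite detM prodf_seq_neq0.
  by apply: sub_all => x.
have [p p0 hp] := prod_sign C ds dsr dsnz.
have dLr := det_real C n L Lr.
have dL0 : \det L != 0 by rewrite -unitfE -unitmxE.
have dLVr : (\det L)^-1 \is Num.real by rewrite realV.
have [q q0 hq] := sign_decomp dLVr (invr_neq0 dL0).
have hodd : ((\det L)^-1 < 0)%R = odd `|m|%N.
  rewrite invr_lt0 -[odd _]negbK hm.
  by case: (real_ltgtP dLr (rpred0 _)) dL0 => //; rewrite eqxx.
have key : (-1) ^+ n * (\det L)^-1 * \det M =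
    (-1) ^+ (n + odd `|m| + Inert M)%N * (q * p).
  rewrite detM hp hq hodd InertE !exprD.
  by rewrite -!mulrA; congr (_ * _); rewrite !mulrA; congr (_ * _); rewrite mulrAC.
rewrite key; split.
  by move=> /(sign_pos _ _ (mulr_gt0 q0 p0)) h; move: h; move: (Inert M) => c h; clear -h; lia.
by move=> /(sign_neg _ _ (mulr_gt0 q0 p0)) h; move: h; move: (Inert M) => c h; clear -h; lia.
Qed.
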